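(* Let $\Gamma$ be a connected finite simple graph and let $\mathcal{R}$ be an equivalence relation on $V(\Gamma)$ with distinct equivalence classes $C_1,\dots,C_k$, where $|C_i|=n_i$ for $1\le i\le k$. Let $\Gamma^{\mathcal{R}}$ be the $\mathcal{R}$-super $\Gamma$ graph. Then all vertices of $C_i$ have the same degree in $\Gamma^{\mathcal{R}}$; call it $d_i$. Call $C_i$ and $C_j$ ($i\neq j$) adjacent if there exist $x\in C_i$, $y\in C_j$ adjacent in $\Gamma$. Let $N$ be the $k\times k$ matrix with $N_{ii}=(n_i-1)d_i\sqrt{2}$ and, for $i\ne j$, $N_{ij}=n_j\sqrt{d_i^2+d_j^2}$ if $C_i$ and $C_j$ are adjacent and $N_{ij}=0$ otherwise. Then the characteristic polynomial of the Sombor matrix of $\Gamma^{\mathcal{R}}$ is \[\chi(S(\Gamma^{\mathcal{R}}),x)=\chi(N,x)\prod_{i=1}^{k}\left(x+d_i\sqrt{2}\right)^{n_i-1},\] where $\chi(M,x)=\det(xI-M)$.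
   Context: All graphs are finite, simple and undirected. For a graph $\Gamma$ with vertices $u_1,\dots,u_m$, the Sombor matrix $S(\Gamma)$ is the $m\times m$ matrix whose $(i,j)$ entry is $\sqrt{\deg(u_i)^2+\deg(u_j)^2}$ if $u_i$ and $u_j$ are adjacent and $0$ otherwise (so the diagonal is zero). Given a graph $\Gamma$ and an equivalence relation $\mathcal{R}$ on $V(\Gamma)$, the $\mathcal{R}$-super $\Gamma$ graph $\Gamma^{\mathcal{R}}$ has vertex set $V(\Gamma)$, and two distinct vertices $x,y$ are adjacent iff either $x,y$ lie in the same $\mathcal{R}$-class or there exist $x'\in[x]_{\mathcal{R}}$ and $y'\in[y]_{\mathcal{R}}$ with $x'$ adjacent to $y'$ in $\Gamma$. *)

(* Defs.v *)
From HB Require Import structures.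
From mathcomp Require Import all_boot all_order all_algebra.
Set Implicit Arguments. Unset Strict Implicit. Unset Printing Implicit Defensive.
Import Order.TTheory GRing.Theory Num.Theory.
Local Open Scope ring_scope.

Definition simple_graph (m : nat) (e : rel 'I_m) : Prop :=
  symmetric e /\ irreflexive e.

Definition connected_graph (m : nat) (e : rel 'I_m) : Prop :=
  forall x y : 'I_m, connect e x y.

Definition super_adj (m : nat) (e : rel 'I_m) (Rl : rel 'I_m) : rel 'I_m :=
  fun x y => (x != y) &&
    (Rl x y || [exists x' : 'I_m, exists y' : 'I_m,
                  [&& Rl x x', Rl y y' & e x' y']]).

Definition deg (m : nat) (e : rel 'I_m) (x : 'I_m) : nat := #|[set y | e x y]|.

Definition sombor_matrix (F : rcfType) (m : nat) (e : rel 'I_m) : 'M[F]_m :=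
  \matrix_(i, j) (if e i j
                  then Num.sqrt ((deg e i)%:R ^+ 2 + (deg e j)%:R ^+ 2)
                  else 0).

(* The quotient matrix N of the theorem, for classes labelled by c : 'I_m -> 'I_k,
   class sizes n_i = #|C_i|, and class degrees d. *)
Definition class_size (m k : nat) (c : 'I_m -> 'I_k) (i : 'I_k) : nat :=
  #|[set x | c x == i]|.

Definition class_adj (m k : nat) (e : rel 'I_m) (c : 'I_m -> 'I_k) (i j : 'I_k) : bool :=
  [exists x : 'I_m, exists y : 'I_m, [&& c x == i, c y == j & e x y]].

Definition N_matrix (F : rcfType) (m k : nat) (e : rel 'I_m) (c : 'I_m -> 'I_k)
    (d : 'I_k -> nat) : 'M[F]_k :=
  \matrix_(i, j)
    (if i == j then ((class_size c i).-1)%:R * (d i)%:R * Num.sqrt 2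
     else if class_adj e c i j
          then (class_size c j)%:R * Num.sqrt ((d i)%:R ^+ 2 + (d j)%:R ^+ 2)
          else 0).

(* Main.v *)
Require Import Defs.
From HB Require Import structures.
From mathcomp Require Import all_boot all_order all_algebra.
From mathcomp Require Import perm ring.
Import Order.TTheory GRing.Theory Num.Theory.
Local Open Scope ring_scope.

Lemma det_reindex (R : comNzRingType) n m (E : n = m) (h : 'I_n -> 'I_m)
  (hi : injective h) (A : 'M[R]_m) :
  \det (\matrix_(i, j) A (h i) (h j)) = \det A.
Proof.
subst m.
have -> : \matrix_(i, j) A (h i) (h j) = row_perm (perm hi) (col_perm (perm hi) A).
  by apply/matrixP => i j; rewrite !mxE !permE.
rewrite row_permE col_permE !det_mulmx !det_perm odd_permV.
by rewrite mulrCA -signr_addb addbb expr0 mulr1.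
Qed.

Lemma cpE (R : comNzRingType) n (M : 'M[R]_n) y x :
  char_poly_mx M y x = 'X *+ (y == x) - (M y x)%:P.
Proof. by rewrite !mxE. Qed.

Theorem theorem3p4 (F : rcfType) (m k : nat) (e : rel 'I_m) (Rl : rel 'I_m)
    (c : 'I_m -> 'I_k) :
  simple_graph e -> connected_graph e ->
  equivalence_rel Rl ->
  (forall x y, Rl x y = (c x == c y)) ->
  (forall i : 'I_k, exists x, c x = i) ->
  exists d : 'I_k -> nat,
    (forall x : 'I_m, deg (super_adj e Rl) x = d (c x)) /\
    char_poly (sombor_matrix F (super_adj e Rl)) =
      char_poly (N_matrix F e c d) *
      \prod_(i < k) ('X + ((d i)%:R * Num.sqrt 2)%:P) ^+ (class_size c i).-1.
Proof.
move=> _ _ _ HR Hsurj.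
have [r Hr] : exists r : 'I_k -> 'I_m, forall i, c (r i) = i.
  exact: fin_all_exists Hsurj.
have r_inj : injective r by move=> i j H; rewrite -(Hr i) -(Hr j) H.
pose dd i := (class_size c i).-1 + #|[set z | (i != c z) && class_adj e c i (c z)]|.
have adjE : forall y z, super_adj e Rl y z =
   ((c y == c z) && (y != z)) || ((c y != c z) && class_adj e c (c y) (c z)).
  move=> y z; rewrite /super_adj HR.
  case: (eqVneq (c y) (c z)) => Hc /=; first by rewrite andbT orbF.
  have Hyz : y != z by apply: contraNneq Hc => ->.
  rewrite Hyz /= /class_adj; apply: eq_existsb => x'; apply: eq_existsb => y'.
  by rewrite !HR (eq_sym (c y)) (eq_sym (c z)).
have degE : forall y, deg (super_adj e Rl) y = dd (c y).
  move=> y; rewrite /deg /dd.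
  have -> : [set z | super_adj e Rl y z] = ([set z | c z == c y] :\ y) :|:
      [set z | (c y != c z) && class_adj e c (c y) (c z)].
    apply/setP => z; rewrite !inE adjE (eq_sym (c z)) (eq_sym z) andbC //.
  rewrite cardsU.
  have -> : ([set z | c z == c y] :\ y) :&: [set z | (c y != c z) && class_adj e c (c y) (c z)] = set0.
    apply/setP => z; rewrite !inE.
    by case: (eqVneq (c z) (c y)) => [->|]; rewrite ?eqxx /= ?andbF.
  have Hy : y \in [set z | c z == c y] by rewrite inE.
  by rewrite cards0 subn0 /class_size (cardsD1 y [set z | c z == c y]) Hy add1n.
exists dd; split; first exact: degE.
set S := sombor_matrix F (super_adj e Rl).
pose s i j : F := Num.sqrt ((dd i)%:R ^+ 2 + (dd j)%:R ^+ 2).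
pose a i := s i i.
pose f i j := if i == j then a i else if class_adj e c i j then s i j else 0.
have SE : forall y z, S y z = f (c y) (c z) - (y == z)%:R * a (c y).
  move=> y z; rewrite /S /sombor_matrix mxE adjE !degE /f.
  case: (eqVneq (c y) (c z)) => Hc /=.
    case: (eqVneq y z) => [<-|Hyz] /=; first by rewrite mul1r subrr.
    by rewrite mul0r subr0 /a /s Hc.
  have Hyz : y != z by apply: contraNneq Hc => ->.
  by rewrite (negPf Hyz) mul0r subr0 /s.
have aE : forall i, a i = (dd i)%:R * Num.sqrt 2.
  move=> i; rewrite /a /s (_ : _ + _ = (dd i)%:R ^+ 2 * 2); last by ring.
  by rewrite sqrtrM ?sqr_ge0 // sqrtr_sqr normr_nat.
pose N' i j := (class_size c j)%:R * f i j - (i == j)%:R * a i.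
have sumE : forall y j, \sum_(z | c z == j) S y z = N' (c y) j.
  move=> y j; rewrite /N'.
  under eq_bigr => z /eqP Hz do rewrite SE Hz.
  rewrite sumrB sumr_const.
  have -> : \sum_(z | c z == j) (y == z)%:R * a (c y) = (c y == j)%:R * a (c y).
    case: (eqVneq (c y) j) => Hj.
      rewrite (bigD1 y) ?Hj //= eqxx big1 ?addr0 // => z /andP[_ Hz].
      by rewrite eq_sym (negPf Hz) mul0r.
    rewrite big1 ?(negPf Hj) ?mul0r // => z /eqP Hz.
    have : y != z by apply/eqP => Hyz; move: Hj; rewrite Hyz Hz eqxx.
    by move/negPf ->; rewrite mul0r.
  rewrite /class_size [#|_|%:R * _]mulr_natl; congr (_ *+ _ - _); apply: eq_card => z; by rewrite inE.
have npos : forall i, (0 < class_size c i)%N.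
  by move=> i; apply/card_gt0P; exists (r i); rewrite inE Hr.
have NE : forall i j, N_matrix F e c dd i j = N' i j.
  move=> i j; rewrite mxE /N' /f; case: (eqVneq i j) => [<-|Hij] /=.
    rewrite aE; have := npos i; move: (class_size c i) => p hp.
    rewrite -[in RHS](prednK hp) -natr1; ring.
  by rewrite mul0r subr0 /s; case: ifP => _; rewrite ?mulr0.
pose NR := [set x | x != r (c x)].
have rNR : forall i, r i \notin NR by move=> i; rewrite inE Hr eqxx.
have NRr : forall x i, x \in NR -> x != r i.
  move=> x i; rewrite inE; apply: contra => /eqP ->; by rewrite Hr.
pose E : 'M[F]_m := \matrix_(y, x) ((y \in NR) && (x == r (c y)))%:R.
pose P := 1%:M + E. pose Q := 1%:M - E.
have EE : E *m E = 0.
  apply/matrixP => y x; rewrite !mxE; apply: big1 => z _; rewrite !mxE.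
  case: (eqVneq z (r (c y))) => [->|]; last by rewrite andbF mul0r.
  by rewrite (negPf (rNR _)) mulr0.
have QP : Q *m P = 1%:M.
  by rewrite /Q /P mulmxBl !mulmxDr !mul1mx mulmx1 EE addr0 addrK.
have CPB : char_poly S = char_poly (Q *m S *m P).
  rewrite /char_poly /char_poly_mx.
  have HX : map_mx polyC Q *m 'X%:M *m map_mx polyC P = 'X%:M.
    by rewrite mul_mx_scalar -scalemxAl -map_mxM QP map_mx1 scalemx1.
  have -> : 'X%:M - map_mx polyC (Q *m S *m P) =
      map_mx polyC Q *m ('X%:M - map_mx polyC S) *m map_mx polyC P.
    by rewrite [in RHS]mulmxBr [in RHS]mulmxBl HX !map_mxM.
  symmetry; rewrite !det_mulmx mulrAC -det_mulmx -map_mxM QP map_mx1 det1 mul1r.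
  done.
have QM : forall (M : 'M[F]_m) y x, (Q *m M) y x = M y x - (y \in NR)%:R * M (r (c y)) x.
  move=> M y x; rewrite mulmxBl mul1mx !mxE (bigD1 (r (c y))) //= big1 ?addr0.
    by rewrite !mxE eqxx andbT.
  move=> z Hz; rewrite !mxE (negPf Hz) andbF mul0r //.
have SPE : forall y x, (S *m P) y x = if x \in NR then S y x else N' (c y) (c x).
  move=> y x; rewrite mulmxDr mulmx1 mxE [(S *m E) y x]mxE.
  case: ifP => Hx.
    rewrite big1 ?addr0 // => z _; idtac.
    by rewrite [E _ _]mxE (negPf (NRr _ _ Hx)) andbF mulr0.
  have Hxr : x = r (c x) by apply/eqP; move: Hx; rewrite inE => /negbFE.
  rewrite -sumE [RHS](bigD1 x) //=; congr (_ + _).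
  rewrite [RHS]big_mkcond /=; apply: eq_bigr => z _; rewrite [E _ _]mxE.
  have -> : (z \in NR) && (x == r (c z)) = (c z == c x) && (z != x).
    rewrite inE; case: (eqVneq (c z) (c x)) => Hc /=.
      by rewrite Hc -Hxr eqxx andbT.
    apply/negbTE; apply/andP => [[_ /eqP Hx']]; move: Hc; by rewrite Hx' Hr eqxx.
  by case: (_ && _); rewrite ?mulr1 ?mulr0.
have Brep : forall y i, (Q *m S *m P) y (r i) = (y \notin NR)%:R * N' (c y) i.
  move=> y i; rewrite -mulmxA QM !SPE (negPf (rNR i)) !Hr.
  by case: (y \in NR); rewrite /= ?mul1r ?mul0r ?subrr ?subr0.
have Bnr : forall y x, x \in NR -> y \in NR ->
    (Q *m S *m P) y x = - ((y == x)%:R * a (c y)).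
  move=> y x Hx Hy; rewrite -mulmxA QM !SPE Hx Hy !SE Hr.
  rewrite [r (c y) == x]eq_sym (negPf (NRr _ _ Hx)) /=.
  ring.
have cardNR : (k + #|NR|)%N = m.
  have HC : #|~: NR| = k.
    have -> : ~: NR = r @: [set: 'I_k].
      apply/setP => x; rewrite !inE negbK.
      apply/eqP/imsetP => [->|[i _ ->]]; first by exists (c x).
      by rewrite Hr.
    by rewrite card_imset // cardsT card_ord.
  by rewrite -{1}HC addnC cardsC card_ord.
pose h (i : 'I_(k + #|NR|)) : 'I_m :=
  match split i with inl a => r a | inr b => enum_val b end.
have hl : forall a, h (lshift _ a) = r a.
  by move=> a0; rewrite /h (unsplitK (inl _ a0)).
have hr : forall b, h (rshift _ b) = enum_val b.
  by move=> b; rewrite /h (unsplitK (inr _ b)).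
have h_inj : injective h.
  move=> i j; rewrite -[i]splitK -[j]splitK.
  case: (split i) => a0; case: (split j) => b0 /=.
  - by rewrite hl hl => /r_inj ->.
  - by rewrite hl hr => H; have := enum_valP b0; rewrite -H (negPf (rNR a0)).
  - by rewrite hr hl => H; have := enum_valP a0; rewrite H (negPf (rNR b0)).
  - by rewrite hr hr => /enum_val_inj ->.
rewrite CPB /char_poly -(@det_reindex _ _ _ cardNR _ h_inj).
pose D := \row_(j < #|NR|) ('X + (a (c (enum_val j)))%:P).
have -> : \matrix_(i, j) char_poly_mx (Q *m S *m P) (h i) (h j) =
   block_mx (char_poly_mx (N_matrix F e c dd))
            (\matrix_(i, j) char_poly_mx (Q *m S *m P) (r i) (enum_val j))
            0 (diag_mx D).
  apply/matrixP => i j; rewrite mxE -[i]splitK -[j]splitK.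
  case: (split i) => a0; case: (split j) => b0 /=.
  - rewrite hl hl block_mxEul !cpE Brep rNR Hr NE mul1r.
    by rewrite (inj_eq r_inj).
  - by rewrite hl hr block_mxEur [RHS]mxE.
  - rewrite hr hl block_mxEdl cpE Brep (enum_valP a0) mul0r mxE.
    by rewrite (negPf (NRr _ _ (enum_valP a0))) subr0.
  - rewrite hr hr block_mxEdr cpE Bnr ?enum_valP // !mxE.
    rewrite (inj_eq enum_val_inj); case: eqP => [->|_] /=.
      by rewrite mul1r polyCN opprK.
    by rewrite mul0r oppr0 subr0 mulr0n.
rewrite det_ublock det_diag.
congr (_ * _).
under eq_bigr => j _ do rewrite mxE.
rewrite -(big_enum_val (fun x => 'X + (a (c x))%:P)) (partition_big c predT) //=.
apply: eq_bigr => i _.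
rewrite (eq_bigr (fun _ => 'X + (a i)%:P)) => [|x /andP[_ /eqP ->]] //.
have -> : \prod_(x | (x \in NR) && (c x == i)) ('X + (a i)%:P) =
    \prod_(x in [set x in NR | c x == i]) ('X + (a i)%:P).
  by apply: eq_bigl => x; rewrite inE.
rewrite prodr_const aE; congr (_ ^+ _).
have -> : [set x in NR | c x == i] = [set x | c x == i] :\ r i.
  apply/setP => x; rewrite !inE.
  by case: (eqVneq (c x) i) => [->|]; rewrite ?andbT ?andbF.
by rewrite /class_size (cardsD1 (r i) [set x | c x == i]) inE Hr eqxx add1n.
Qed.
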